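(* Let $k\ge 1$ be an integer, and fix $r>0$ and $0<\beta<1$. Then there exists a finite metric space $(X,\rho)$, equipped with the counting measure $\mu(A)=|A|$, such that (i) $M(X)=0$; (ii) $T_{k+1}(X)\le \dfrac{1}{(k+1)!}\,\beta\,|X|^{k+1}$; (iii) $|X|-\mu(\mathcal{X}^* )\ge \dfrac{1}{k+1}\,\beta^{1/k}\,|X|$, where $\mathcal{X}^*$ is an $r$-cluster structure of order $k$ of maximal measure in $X$.
   Context: For a metric space $(X,\rho)$ with a measure $\mu$ and a fixed $r>0$: an $s$-cluster is a measurable subset of $X$ of diameter at most $s$. For sets $A,B$, $\rho(A,B)=\inf\{\rho(x,y): x\in A, y\in B\}$. An $r$-cluster structure of order $k$ is a family $\mathcal{X}=\{X_1,\dots,X_k\}$ of $2r$-clusters with $\rho(X_i,X_j)\ge r$ for all $1\le i<j\le k$; its measure is $\mu(\mathcal{X})=\sum_{i=1}^k\mu(X_i)$. Define $M(X)=\frac12(\mu\otimes\mu)\{(x,y)\in X^2: r<\rho(x,y)\le 3r\}$ and, for an integer $m\ge1$, $T_m(X)=\frac{1}{m!}\mu^{\otimes m}\{(x_1,\dots,x_m)\in X^m: \rho(x_i,x_j)>r \text{ for all } 1\le i<j\le m\}$. *)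

(* Defs.v *)
From HB Require Import structures.
From mathcomp Require Import all_boot all_order all_algebra.
From mathcomp Require Import all_classical all_reals exp.
Set Implicit Arguments. Unset Strict Implicit. Unset Printing Implicit Defensive.
Import Order.TTheory GRing.Theory Num.Theory.
Local Open Scope ring_scope.

Section Defs.
Variables (R : realType) (T : finType) (rho : T -> T -> R).

Definition is_metric : Prop :=
  [/\ (forall x y, 0 <= rho x y),
      (forall x y, rho x y = 0 <-> x = y),
      (forall x y, rho x y = rho y x) &
      (forall x y z, rho x z <= rho x y + rho y z)].

(* an s-cluster: diameter at most s (every subset is measurable for the
   counting measure on a finite space) *)
Definition is_cluster (s : R) (A : {set T}) : Prop :=
  forall x y, x \in A -> y \in A -> rho x y <= s.

(* rho(A,B) >= r, i.e. inf over the finite set of pairs is >= r *)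
Definition set_dist_ge (r : R) (A B : {set T}) : Prop :=
  forall x y, x \in A -> y \in B -> r <= rho x y.

Definition is_cluster_structure (r : R) (k : nat) (Xs : 'I_k -> {set T}) : Prop :=
  (forall i, is_cluster (2 * r) (Xs i)) /\
  (forall i j : 'I_k, (i < j)%N -> set_dist_ge r (Xs i) (Xs j)).

Definition cs_measure (k : nat) (Xs : 'I_k -> {set T}) : nat :=
  \sum_(i < k) #|Xs i|.

Definition M_of (r : R) : R :=
  #|[set p : T * T | (r < rho p.1 p.2) && (rho p.1 p.2 <= 3 * r)]|%:R / 2.

Definition T_of (r : R) (m : nat) : R :=
  #|[set t : {ffun 'I_m -> T} |
      [forall i : 'I_m, forall j : 'I_m, (i < j)%N ==> (r < rho (t i) (t j))]]|%:R
  / (m`!)%:R.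

End Defs.

(* Main.v *)
Require Import Defs.
From HB Require Import structures.
From mathcomp Require Import all_boot all_order all_algebra.
From mathcomp Require Import all_classical all_reals exp.
From mathcomp Require Import lra ring.

Import Order.TTheory GRing.Theory Num.Theory.
Local Open Scope ring_scope.

Lemma famc (I T : finType) (F : I -> {set T}) :
  #|[set t : {ffun I -> T} | t \in family (fun i => mem (F i))]| = (\prod_i #|F i|)%N.
Proof. by rewrite cardsE card_family foldrE big_map big_enum. Qed.

Lemma card_bigcup_le (I T : finType) (F : I -> {set T}) :
  (#|\bigcup_i F i| <= \sum_i #|F i|)%N.
Proof.
apply: (big_ind2 (fun (A : {set T}) (n : nat) => #|A| <= n)%N) => //.
- by rewrite cards0.
- move=> A1 n1 A2 n2 h1 h2; apply: leq_trans (leq_card_setU _ _) _; exact: leq_add.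
Qed.

Section Constr.
Variables (R : realType) (r : R) (A m : nat).
Hypothesis hr : 0 < r.

Definition TT : finType := ('I_A + 'I_m)%type.
Definition isl (x : TT) : bool := if x is inl _ then true else false.
Definition rh (x y : TT) : R :=
  if x == y then 0 else if isl x && isl y then r / 2 else 4 * r.

Definition LL := [set x : TT | isl x].
Definition RR := [set x : TT | ~~ isl x].

Lemma cardL : #|LL| = A.
Proof.
have inj : injective (@inl 'I_A 'I_m) by move=> a b [].
have -> : LL = [set inl x | x in 'I_A].
  apply/setP => -[x|x]; rewrite !inE.
    by rewrite imset_f.
  by apply/esym/imsetP => -[y _].
by rewrite card_imset // card_ord.
Qed.

Lemma cardR : #|RR| = m.
Proof.
have inj : injective (@inr 'I_A 'I_m) by move=> a b [].
have -> : RR = [set inr x | x in 'I_m].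
  apply/setP => -[x|x]; rewrite !inE.
    by apply/esym/imsetP => -[y _].
  by rewrite imset_f.
by rewrite card_imset // card_ord.
Qed.

Lemma rh_xx x : rh x x = 0.
Proof. by rewrite /rh eqxx. Qed.

Lemma rh_cases x y : rh x y = 0 \/ rh x y = r / 2 \/ rh x y = 4 * r.
Proof. rewrite /rh; case: eqP => _; [by left|]; case: ifP => _; tauto. Qed.

Lemma rh_LL x y : isl x -> isl y -> rh x y <= r / 2.
Proof.
move=> hx hy; rewrite /rh hx hy; case: eqP => _ //.
by apply: divr_ge0; apply: ltW.
Qed.

Lemma rh_far x y : x != y -> ~~ (isl x && isl y) -> rh x y = 4 * r.
Proof. by rewrite /rh => /negPf -> /negPf ->. Qed.

Lemma metric_rh : is_metric rh.
Proof.
split.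
- move=> x y; have := rh_cases x y; case=> [->|[->|->]] //.
  + by apply: divr_ge0; apply: ltW.
  + by rewrite mulr_ge0 // ltW.
- move=> x y; split; last by move=> ->; rewrite /rh eqxx.
  rewrite /rh; case: eqP => // _; case: ifP => _ h; exfalso; move: h hr; (have := hr; lra).
- by move=> x y; rewrite /rh eq_sym andbC.
- move=> x y z.
  have pos : forall a b, 0 <= rh a b.
    move=> a b; have := rh_cases a b; case=> [->|[->|->]] //.
    + by apply: divr_ge0; apply: ltW.
    + by rewrite mulr_ge0 // ltW.
  have [->|nxz] := eqVneq x z; first by rewrite rh_xx addr_ge0.
  have [hb|hb] := boolP (isl x && isl z).
    have : rh x z <= r / 2 by case/andP: hb => ? ?; exact: rh_LL.
    have [->|nxy] := eqVneq x y.
      by rewrite rh_xx add0r.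
    have : r / 2 <= rh x y.
      have := rh_cases x y; case=> [h|[->|->]]; last 2 first.
      - by [].
      - (have := hr; lra).
      by move: h; rewrite /rh (negPf nxy); case: ifP => _ h; exfalso; (have := hr; lra).
    have := pos y z; (have := hr; lra).
  have [<-|nxy] := eqVneq x y; first by rewrite rh_xx add0r.
  have [<-|nyz] := eqVneq y z; first by rewrite rh_xx addr0.
  rewrite (rh_far _ _ nxz hb).
  case/nandP: hb => hb.
    rewrite (rh_far x y); [|by apply/eqP => e; move: nxy; rewrite e eqxx|by rewrite (negPf hb)].
    have := pos y z; (have := hr; lra).
  rewrite (rh_far y z); [|by apply/eqP => e; move: nyz; rewrite e eqxx|by rewrite (negPf hb) andbF].
  have := pos x y; (have := hr; lra).
Qed.

Lemma M_rh : M_of rh r = 0.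
Proof.
rewrite /M_of.
suff -> : [set p : TT * TT | (r < rh p.1 p.2) && (rh p.1 p.2 <= 3 * r)] = finset.set0.
  by rewrite cards0 mul0r.
apply/setP => p; rewrite !inE.
have := rh_cases p.1 p.2; case=> [->|[->|->]].
- by rewrite ltNge (ltW hr).
- apply/negbTE/negP => /andP[h _]; move: h; rewrite ltNge => /negP; apply; (have := hr; lra).
- apply/negbTE/negP => /andP[_ h]; move: h; rewrite leNgt => /negP; apply; (have := hr; lra).
Qed.

Lemma cs_bound k (Xs : 'I_k -> {set TT}) :
  is_cluster_structure rh r Xs -> (cs_measure Xs <= A + k)%N.
Proof.
case=> hcl hsep.
rewrite /cs_measure.
have step : forall i, (#|Xs i| <= #|Xs i :&: LL| + 1)%N.
  move=> i; rewrite -(cardsID LL (Xs i)) leq_add2l.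
  apply/card_le1_eqP => x y; rewrite !inE => /andP[hx xi] /andP[hy yi].
  apply/eqP/negPn/negP => nxy.
  have := hcl i x y xi yi.
  rewrite (rh_far x y); [|by apply/eqP => e; move: nxy; rewrite e eqxx|by rewrite (negPf hx)].
  (have := hr; lra).
apply: (@leq_trans (\sum_(i < k) (#|Xs i :&: LL| + 1))%N); first by apply: leq_sum => i _; exact: step.
rewrite big_split /= sum1_card card_ord leq_add2r.
case: (pickP (fun i => Xs i :&: LL != finset.set0)) => [i0 hi0|none]; last first.
  by rewrite big1 // => i _; move: (none i) => /negbFE/eqP ->; rewrite cards0.
rewrite (bigD1 i0) //= big1 ?addn0.
  by apply: leq_trans (subset_leq_card (subsetIr _ _)) _; rewrite cardL.
move=> i ni; apply/eqP; rewrite cards_eq0; apply/negPn/negP.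
case/set0Pn => x; rewrite inE => /andP[xi xl].
case/set0Pn: hi0 => y; rewrite inE => /andP[yi yl].
move: xl yl; rewrite !inE => xl yl.
have hle := rh_LL _ _ xl yl.
have hle' := rh_LL _ _ yl xl.
case: (ltngtP i i0) => [lt|lt|eq].
- have := hsep i i0 lt x y xi yi; (have := hr; lra).
- have := hsep i0 i lt y x yi xi; (have := hr; lra).
- by move/eqP: ni; apply; apply: val_inj.
Qed.

Definition good k := [set t : {ffun 'I_k -> TT} |
      [forall i : 'I_k, forall j : 'I_k, (i < j)%N ==> (r < rh (t i) (t j))]].

Lemma good_bound k : (#|good k.+1| <= m ^ k.+1 + k.+1 * (A * m ^ k))%N.
Proof.
pose allR := [set t : {ffun 'I_k.+1 -> TT} | t \in family (fun i => mem RR)].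
pose fam i := [set t : {ffun 'I_k.+1 -> TT} |
   t \in family (fun j => mem (if j == i then LL else RR))].
have cA : #|allR| = (m ^ k.+1)%N.
  by rewrite famc prod_nat_const card_ord cardR.
have cF : forall i, #|fam i| = (A * m ^ k)%N.
  move=> i; rewrite famc (bigD1 i) //= eqxx cardL.
  rewrite (eq_bigr (fun _ => m)); last by move=> j /negPf ->; rewrite cardR.
  by rewrite prod_nat_const cardC1 card_ord.
have sub : good k.+1 \subset allR :|: \bigcup_i fam i.
  apply/fintype.subsetP => t; rewrite inE => /forallP hg.
  have hg' : forall i j, i != j -> ~~ (isl (t i) && isl (t j)).
    move=> i j nij; apply/negP => /andP[hi hj].
    have h1 := rh_LL _ _ hi hj; have h2 := rh_LL _ _ hj hi.
    case: (ltngtP i j) => [lt|lt|eq].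
    - move: (hg i) => /forallP /(_ j); rewrite lt /=; (have := hr; lra).
    - move: (hg j) => /forallP /(_ i); rewrite lt /=; (have := hr; lra).
    - by move/eqP: nij; apply; apply: val_inj.
  case: (pickP (fun i => isl (t i))) => [i0 hi0|none].
    apply/finset.setUP; right; apply/finset.bigcupP; exists i0 => //.
    rewrite inE; apply/familyP => j; case: eqP => [->|/eqP nj]; rewrite inE //.
    have nj' : i0 != j by rewrite eq_sym.
    by move: (hg' i0 j nj'); rewrite hi0.
  apply/finset.setUP; left; rewrite inE; apply/familyP => j.
  by rewrite inE none.
apply: leq_trans (subset_leq_card sub) _.
apply: leq_trans (leq_card_setU _ _) _.
rewrite cA leq_add2l.
apply: (leq_trans (@card_bigcup_le _ _ fam)).
by rewrite (eq_bigr _ (fun i _ => cF i)) sum_nat_const card_ord.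
Qed.

End Constr.
Lemma bern (R : realType) (e : R) n : 0 <= e -> e <= 1 ->
  (1 + e) ^+ n <= 1 + e * (2 ^+ n - 1).
Proof.
move=> e0 e1; elim: n => [|n IH]; first by rewrite !expr0 subrr mulr0 addr0.
have h2 : 1 <= (2:R) ^+ n by apply: exprn_ege1; lra.
rewrite exprS [2 ^+ n.+1]exprS.
have hp : 0 <= 1 + e by lra.
apply: le_trans (ler_wpM2l hp IH) _.
have : e * e <= e by nra.
nra.
Qed.

Lemma key (R : realType) (k : nat) (g N mm : R) : (1 <= k)%N -> 0 < g -> g <= 1/2 ->
  (k%:R + 1) ^+ 2 * 2 ^+ k <= g ^+ 2 * N ->
  g * N <= mm -> mm <= g * N + k%:R + 1 ->
  mm ^+ k * ((k%:R + 1) * N - k%:R * mm) <= ((k%:R + 1) * g) ^+ k * N ^+ k.+1.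
Proof.
move=> k1 g0 g2 hN h1 h2.
have kr : 1 <= (k%:R : R) by rewrite ler1n.
have p2 : 1 <= (2:R) ^+ k by apply: exprn_ege1; lra.
have N0 : 0 < N.
  have : 0 < (k%:R + 1) ^+ 2 * 2 ^+ k :> R by apply: mulr_gt0; apply: exprn_gt0; lra.
  move=> h; have : 0 < g ^+ 2 * N by lra.
  by rewrite pmulr_rgt0 // exprn_gt0.
move: h1 h2; set y := g * N => h1 h2.
have y0 : 0 < y by apply: mulr_gt0.
have hy : k%:R + 1 <= y.
  have : g ^+ 2 * N <= g * N by rewrite expr2 -mulrA ler_piMl //; [apply: mulr_ge0; lra| lra].
  have : k%:R + 1 <= (k%:R + 1) ^+ 2 * 2 ^+ k :> R.
    have hK : 1 <= (k%:R : R) + 1 by lra.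
    rewrite [(k%:R + 1) ^+ 2]expr2; nra.
  rewrite /y; lra.
set e := (k%:R + 1) / y.
have e0 : 0 <= e by apply: divr_ge0; lra.
have e1 : e <= 1 by rewrite ler_pdivrMr // mul1r.
have ye : y * e = k%:R + 1 by rewrite /e mulrC -mulrA mulVf ?mulr1 // gt_eqF.
have mm0 : 0 <= mm by apply: le_trans (ltW y0) h1.
have hm : mm ^+ k <= y ^+ k * (1 + e * 2 ^+ k).
  apply: (@le_trans _ _ ((y * (1 + e)) ^+ k)).
    rewrite lerXn2r // ?nnegrE; nra.
  rewrite exprMn ler_wpM2l //; first by apply: exprn_ge0; lra.
  apply: le_trans (@bern _ e k e0 e1) _; nra.
have hX : (k%:R + 1) * N - k%:R * mm <= N * (k%:R + 1 - k%:R * g).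
  have : k%:R * y <= k%:R * mm by rewrite ler_wpM2l //; lra.
  rewrite /y; lra.
have X0 : 0 <= N * (k%:R + 1 - k%:R * g).
  apply: mulr_ge0; first lra.
  have : k%:R * g <= k%:R * (1/2) by rewrite ler_wpM2l //; lra.
  lra.
have hc : (1 + e * 2 ^+ k) * (k%:R + 1 - k%:R * g) <= (k%:R + 1) ^+ k.
  apply: (@le_trans _ _ (k%:R + 1)); last first.
    rewrite -[X in X <= _]expr1; apply: ler_eXnr => //; lra.
  suff : e * 2 ^+ k * (k%:R + 1) <= g.
    have : 0 <= e * 2 ^+ k * (k%:R * g) by apply: mulr_ge0; [apply: mulr_ge0; lra | nra].
    have : g <= k%:R * g by rewrite ler_peMl //; lra.
    nra.
  have -> : e * 2 ^+ k * (k%:R + 1) = (k%:R + 1) ^+ 2 * 2 ^+ k / y.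
    by rewrite /e expr2; field; lra.
  rewrite ler_pdivrMr // /y mulrA -expr2; lra.
have pk : 0 <= mm ^+ k by apply: exprn_ge0.
apply: le_trans (ler_wpM2l pk hX) _.
apply: le_trans (ler_wpM2r X0 hm) _.
have -> : ((k%:R + 1) * g) ^+ k * N ^+ k.+1 = y ^+ k * N * (k%:R + 1) ^+ k.
  by rewrite /y !exprMn exprS; ring.
rewrite -!mulrA ler_wpM2l //; first by apply: exprn_ge0; lra.
rewrite mulrCA ler_wpM2l //; first lra.
by move: hc; rewrite /e !mulrA.
Qed.

Theorem mainTheorem1 (R : realType) (k : nat) (r beta : R) :
  (1 <= k)%N -> 0 < r -> 0 < beta -> beta < 1 ->
  exists (T : finType) (rho : T -> T -> R),
    [/\ is_metric rho,
        (0 < #|T|)%N,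
        M_of rho r = 0,
        T_of rho r k.+1 <= (k.+1`!)%:R^-1 * beta * (#|T|%:R) ^+ k.+1 &
        forall Xs : 'I_k -> {set T},
          is_cluster_structure rho r Xs ->
          (forall Ys : 'I_k -> {set T},
             is_cluster_structure rho r Ys -> (cs_measure Ys <= cs_measure Xs)%N) ->
          (k.+1%:R)^-1 * beta `^ (k%:R)^-1 * #|T|%:R <= #|T|%:R - (cs_measure Xs)%:R].
Proof.
move=> k1 r0 b0 b1.
set ga := beta `^ (k%:R)^-1.
have kR : (k%:R : R) != 0 by rewrite pnatr_eq0 -lt0n.
have ga0 : 0 < ga := powR_gt0 _ b0.
have gk : ga ^+ k = beta.
  by rewrite -powR_mulrn ?(ltW ga0) // /ga -powRrM mulVf // powRr1 // ltW.
have ga1 : ga <= 1.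
  rewrite leNgt; apply/negP => h; have := exprn_ege1 k (ltW h); rewrite gk; lra.
have kr : 1 <= (k%:R : R) by rewrite ler1n.
have kS : (k.+1%:R : R) = k%:R + 1 by rewrite -natr1.
set g := ga / (k%:R + 1).
have g0 : 0 < g by apply: divr_gt0; lra.
have g2 : g <= 1 / 2 by rewrite ler_pdivrMr; lra.
have gga : (k%:R + 1) * g = ga by rewrite /g mulrC mulfVK //; apply/eqP; lra.
set B := (k%:R + 1) ^+ 2 * 2 ^+ k / g ^+ 2.
set N := (Num.truncn B).+1.
have hB : B < N%:R by rewrite -truncn_le_nat.
have g20 : 0 < g ^+ 2 by apply: exprn_gt0.
have hN : (k%:R + 1) ^+ 2 * 2 ^+ k <= g ^+ 2 * N%:R.
  have -> : (k%:R + 1) ^+ 2 * 2 ^+ k = g ^+ 2 * B by rewrite /B mulrCA mulfV ?mulr1 // gt_eqF.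
  by rewrite ler_wpM2l // ?ltW.
set n := (Num.truncn (g * N%:R)).+1.
have gN0 : 0 <= g * N%:R by apply: mulr_ge0; [apply: ltW|].
have hn1 : g * N%:R < n%:R by rewrite -truncn_le_nat.
have hn2 : n%:R <= g * N%:R + 1.
  by rewrite /n -natr1 lerD2r truncn_le.
set m := (n + k)%N.
have p2 : 2 <= (2:R) ^+ k by rewrite -[X in X <= _]expr1; apply: ler_eXnr => //; lra.
have mN : (m <= N)%N.
  rewrite -(ler_nat R) natrD.
  have g4 : g ^+ 2 <= 1/4 by rewrite expr2; nra.
  have h1 : (k%:R + 1) ^+ 2 * 2 ^+ k <= N%:R / 4 :> R.
    apply: (le_trans hN); have : 0 <= (N%:R : R) by []. nra.
  have h2 : 2 * (k%:R + 1) <= (k%:R + 1) ^+ 2 * 2 ^+ k :> R.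
    rewrite [(k%:R + 1) ^+ 2]expr2; have hK : 1 <= (k%:R : R) + 1 by lra.
    nra.
  have h3 : g * N%:R <= N%:R / 2.
    have : 0 <= (N%:R : R) by []. nra.
  lra.
set A := (N - m)%N.
exists (TT A m), (@rh R r A m).
have cT : #|TT A m| = N by rewrite card_sum !card_ord subnK.
split.
- exact: metric_rh.
- by rewrite cT.
- exact: M_rh.
- have gb := @good_bound R r A m r0 k.
  rewrite /T_of cT.
  rewrite mulrC -mulrA ler_wpM2l //; first by rewrite invr_ge0.
  rewrite mulrC.
  apply: le_trans (_ : (m ^ k.+1 + k.+1 * (A * m ^ k))%N%:R <= _).
    by rewrite ler_nat.
  have -> : ((m ^ k.+1 + k.+1 * (A * m ^ k))%N%:R : R) =
     m%:R ^+ k * ((k%:R + 1) * N%:R - k%:R * m%:R).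
    rewrite natrD !natrM !natrX /A natrB // kS exprS; ring.
  rewrite -gk -gga.
  rewrite mulrC; apply: key => //.
  + by apply: le_trans (ltW hn1) _; rewrite ler_nat leq_addr.
  + by rewrite /m natrD; lra.
- move=> Xs hXs _.
  have cs := @cs_bound R r A m r0 k Xs hXs.
  rewrite cT kS -/g.
  have : ((cs_measure Xs)%:R : R) <= A%:R + k%:R by rewrite -natrD ler_nat.
  have : (A%:R : R) = N%:R - n%:R - k%:R by rewrite /A natrB // /m natrD; ring.
  have -> : (k%:R + 1)^-1 * ga = g by rewrite /g mulrC.
  move=> h1 h2; have := ltW hn1; lra.
Qed.
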